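(* For $\mu\in M(\mathbb{T})$: $\mu$ is spectrally reasonable if and only if $T_{m}\mu$ is spectrally reasonable for every $m\in\mathbb{Z}$.
   Context: $\mathbb{T}=\mathbb{R}/2\pi\mathbb{Z}$; $M(\mathbb{T})$ is the convolution Banach algebra of complex regular Borel measures on $\mathbb{T}$; $\sigma(\mu)$ is the spectrum in $M(\mathbb{T})$, $\widehat{\mu}(n)=\int e^{-int}d\mu(t)$. $\mathscr{N}$ is the set of $\mu$ with $\sigma(\mu)=\overline{\{\widehat{\mu}(n):n\in\mathbb{Z}\}}$; $\mu$ is spectrally reasonable if $\mu+\nu\in\mathscr{N}$ for every $\nu\in\mathscr{N}$. For $m\in\mathbb{Z}$, $T_m:M(\mathbb{T})\to M(\mathbb{T})$ is defined by $d(T_m\mu)(t)=e^{imt}d\mu(t)$, equivalently $\widehat{T_m\mu}(n)=\widehat{\mu}(n-m)$ for all $n\in\mathbb{Z}$. *)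

(* Defs.v *)
From HB Require Import structures.
From mathcomp Require Import all_boot all_order all_algebra.
From mathcomp Require Import complex.
From mathcomp Require Import all_classical all_reals all_analysis.

Set Implicit Arguments.
Unset Strict Implicit.
Unset Printing Implicit Defensive.

Import Order.TTheory GRing.Theory Num.Theory.
Import numFieldTopology.Exports numFieldNormedType.Exports.

Local Open Scope classical_set_scope.
Local Open Scope ring_scope.
Local Open Scope complex_scope.

(* Model of M(T), T = R/2piZ identified with [0, 2pi[.
   A complex regular Borel measure on T is represented by a finite list of
   "atoms" (rho, h): rho a finite positive Borel measure on R concentrated on
   [0, 2pi[, and h : R -> C a rho-integrable density; the atom stands for the
   complex measure h d rho and the list for the sum of its atoms.  Every complex
   Borel measure on T arises this way (e.g. one atom with rho = |mu| and
   h = d mu / d|mu|), and sums of measures are concatenations of lists.  All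
   notions below only depend on the represented set function. *)

Section MeasureAlgebra.
Variable R : realType.
Local Notation C := R[i].

Record atom := Atom {
  a_meas : {finite_measure set R -> \bar R};
  a_dens : R -> C }.

Definition cmeasure := seq atom.

Definition atom_wf (a : atom) : Prop :=
  [/\ a_meas a (~` `[0, 2 * pi[) = 0%E,
      (a_meas a).-integrable setT (fun x => (complex.Re (a_dens a x))%:E) &
      (a_meas a).-integrable setT (fun x => (complex.Im (a_dens a x))%:E)].

Definition cm_wf (mu : cmeasure) : Prop :=
  foldr (fun a P => atom_wf a /\ P) True mu.

Definition cint (rho : {finite_measure set R -> \bar R}) (f : R -> C) : C :=
  (Rintegral rho setT (fun x => complex.Re (f x)))
    +i* (Rintegral rho setT (fun x => complex.Im (f x))).

Definition cm_val (mu : cmeasure) (A : set R) : C :=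
  \sum_(a <- mu) cint (a_meas a) (fun x => a_dens a x * (x \in A)%:R).

Definition expi (t : R) : C := cos t +i* sin t.

Definition fourier (mu : cmeasure) (n : int) : C :=
  \sum_(a <- mu) cint (a_meas a) (fun t => a_dens a t * expi (- (n%:~R * t))).

Definition addT (x t : R) : R :=
  if x + t < 2 * pi then x + t else x + t - 2 * pi.

Definition conv_val (mu nu : cmeasure) (A : set R) : C :=
  \sum_(a <- mu) \sum_(b <- nu)
    cint (a_meas a) (fun x => a_dens a x *
      cint (a_meas b) (fun t => a_dens b t * (addT x t \in A)%:R)).

Definition delta0 : cmeasure := [:: Atom (\d_(0 : R)) (fun _ => 1)].

Definition cm_scale (c : C) (mu : cmeasure) : cmeasure :=
  map (fun a => Atom (a_meas a) (fun x => c * a_dens a x)) mu.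

Definition cm_invertible (mu : cmeasure) : Prop :=
  exists nu, cm_wf nu /\
    forall A, measurable A -> conv_val mu nu A = cm_val delta0 A.

Definition spectrum (mu : cmeasure) : set C^o :=
  [set lam | ~ cm_invertible (mu ++ cm_scale (- lam) delta0)].

Definition inN (mu : cmeasure) : Prop :=
  spectrum mu = closure (range (fourier mu) : set C^o).

Definition spectrally_reasonable (mu : cmeasure) : Prop :=
  forall nu, cm_wf nu -> inN nu -> inN (mu ++ nu).

Definition Tm (m : int) (mu : cmeasure) : cmeasure :=
  map (fun a => Atom (a_meas a) (fun t => expi (m%:~R * t) * a_dens a t)) mu.

End MeasureAlgebra.

(* Main.v *)
Require Import Defs.
From HB Require Import structures.
From mathcomp Require Import all_boot all_order all_algebra.
From mathcomp Require Import complex.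
From mathcomp Require Import all_classical all_reals all_analysis.
From mathcomp Require Import measurable_realfun.
From mathcomp Require Import ring lra.
Set Implicit Arguments.
Unset Strict Implicit.
Unset Printing Implicit Defensive.
Import Order.TTheory GRing.Theory Num.Theory.
Import numFieldTopology.Exports numFieldNormedType.Exports.
Local Open Scope classical_set_scope.
Local Open Scope ring_scope.
Local Open Scope complex_scope.
Local Notation measurable_funD := measurable_realfun.measurable_funD.
Local Notation measurable_funB := measurable_realfun.measurable_funB.
Local Notation measurable_funM := measurable_realfun.measurable_funM.
Section Alg.
Variable R : realType.
Local Notation C := R[i].
Implicit Types (mu nu : cmeasure R).

Lemma expiD (a b : R) : expi (a + b) = expi a * expi b.
Proof.
rewrite /expi cosD sinD; apply/eqP; rewrite eq_complex /=; apply/andP; split;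
  apply/eqP; ring.
Qed.

Lemma expi0 : expi (0 : R) = 1.
Proof. by rewrite /expi cos0 sin0. Qed.

Lemma expiN (a : R) : expi (- a) * expi a = 1.
Proof. by rewrite -expiD addNr expi0. Qed.

Lemma expi2pi_nat (n : nat) : expi (n%:R * (2 * pi) : R) = 1.
Proof.
elim: n => [|n IH]; first by rewrite mul0r expi0.
rewrite -addn1 natrD mulrDl expiD IH mul1r mul1r.
by rewrite /expi mulr_natl cos2pi sin2pi.
Qed.

Lemma expi2pi_int (m : int) : expi (m%:~R * (2 * pi) : R) = 1.
Proof.
case: m => n; first by rewrite pmulrn expi2pi_nat.
rewrite NegzE mulrNz mulNr.
have := expiN (n.+1%:R * (2 * pi)).
by rewrite -pmulrn expi2pi_nat mulr1.
Qed.

Lemma expi_addT (m : int) (x t : R) :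
  expi (m%:~R * addT x t) = expi (m%:~R * x) * expi (m%:~R * t).
Proof.
rewrite /addT; case: ifP => _; first by rewrite mulrDr expiD.
rewrite mulrBr expiD.
have := expiN (m%:~R * (2 * pi)); rewrite expi2pi_int mulr1 => ->.
by rewrite mulr1 mulrDr expiD.
Qed.

Lemma Tm_cat m mu nu : Tm m (mu ++ nu) = Tm m mu ++ Tm m nu.
Proof. exact: map_cat. Qed.

Lemma Tm0 mu : Tm 0 mu = mu.
Proof.
rewrite /Tm; elim: mu => [|[rho h] mu IH] //=; rewrite IH; congr (_ :: _).
by congr Atom; apply: funext => t; rewrite mul0r expi0 mul1r.
Qed.

Lemma TmK m mu : Tm (- m) (Tm m mu) = mu.
Proof.
rewrite /Tm; elim: mu => [|[rho h] mu IH] //=; rewrite IH; congr (_ :: _).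
congr Atom; apply: funext => t; rewrite mulrA -[(- m)%:~R]/(intmul 1 (- m)).
by rewrite mulrNz mulNr expiN mul1r.
Qed.

Lemma fourier_Tm m mu n : fourier (Tm m mu) n = fourier mu (n - m).
Proof.
rewrite /fourier /Tm big_map; apply: eq_bigr => [[rho h]] _ /=.
congr cint; apply: funext => t.
rewrite [_ * h t]mulrC -mulrA -expiD; congr (_ * expi _).
by rewrite intrB; ring.
Qed.

Lemma range_fourier_Tm m mu : range (fourier (Tm m mu)) = range (fourier mu).
Proof.
apply/seteqP; split => z [n _ <-].
  by exists (n - m) => //; rewrite fourier_Tm.
by exists (n + m) => //; rewrite fourier_Tm addrK.
Qed.

End Alg.
Section Ana.
Variable R : realType.
Local Notation C := R[i].
Local Notation Re := (@complex.Re R).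
Local Notation Im := (@complex.Im R).

Lemma bndT (T : Type) (f : T -> R) (M : R) : (forall x, `|f x| <= M) ->
  [bounded f x | x in setT].
Proof.
move=> H; exists M; split; first by rewrite num_real.
by move=> M' hM' x _; apply: le_trans (H x) (ltW hM').
Qed.

Lemma cReM (x y : C) : Re (x * y) = Re x * Re y - Im x * Im y.
Proof. by case: x => a b; case: y => c d. Qed.
Lemma cImM (x y : C) : Im (x * y) = Re x * Im y + Im x * Re y.
Proof. by case: x => a b; case: y => c d /=; rewrite addrC. Qed.
Lemma cReD (x y : C) : Re (x + y) = Re x + Re y.
Proof. by case: x => a b; case: y => c d. Qed.
Lemma cImD (x y : C) : Im (x + y) = Im x + Im y.
Proof. by case: x => a b; case: y => c d. Qed.

Definition nice (u : R -> C) :=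
  [/\ measurable_fun setT (fun x => Re (u x)),
      measurable_fun setT (fun x => Im (u x)) &
      exists M, forall x, `|Re (u x)| <= M /\ `|Im (u x)| <= M].

Definition nicebd (u : R -> C) (M : R) :=
  forall x, `|Re (u x)| <= M /\ `|Im (u x)| <= M.

Lemma niceD u v : nice u -> nice v -> nice (fun x => u x + v x).
Proof.
move=> [mu1 mu2 [M HM]] [mv1 mv2 [N HN]]; split.
- by under eq_fun do rewrite cReD; exact: measurable_funD.
- by under eq_fun do rewrite cImD; exact: measurable_funD.
exists (M + N) => x; rewrite cReD cImD; have [h1 h2] := HM x; have [h3 h4] := HN x.
by split; apply: le_trans (ler_normD _ _) _; apply: lerD.
Qed.

Lemma niceM u v : nice u -> nice v -> nice (fun x => u x * v x).
Proof.
move=> [mu1 mu2 [M HM]] [mv1 mv2 [N HN]]; split.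
- by under eq_fun do rewrite cReM; apply: measurable_funB; exact: measurable_funM.
- by under eq_fun do rewrite cImM; apply: measurable_funD; exact: measurable_funM.
exists (M * N + M * N) => x; rewrite cReM cImM.
have [h1 h2] := HM x; have [h3 h4] := HN x.
have M0 : 0 <= M by apply: le_trans h1.
have N0 : 0 <= N by apply: le_trans h3.
split; apply: le_trans (ler_normB _ _) _ || apply: le_trans (ler_normD _ _) _;
  apply: lerD; rewrite normrM; apply: ler_pM => //.
Qed.

Lemma nice_cst (c : C) : nice (fun _ => c).
Proof.
split; [exact: measurable_cst|exact: measurable_cst|].
by exists (`|Re c| + `|Im c|) => x; split; rewrite ?lerDl ?lerDr.
Qed.

Lemma nice_comp u (phi : R -> R) : nice u -> measurable_fun setT phi ->
  nice (fun x => u (phi x)).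
Proof.
move=> [m1 m2 [M HM]] mphi; split.
- exact: (measurableT_comp m1 mphi).
- exact: (measurableT_comp m2 mphi).
by exists M => x; exact: HM.
Qed.

Definition cok (rho : {finite_measure set R -> \bar R}) (f : R -> C) :=
  rho.-integrable setT (fun x => (Re (f x))%:E) /\
  rho.-integrable setT (fun x => (Im (f x))%:E).

Lemma cok_mul rho h u : cok rho h -> nice u -> cok rho (fun x => h x * u x).
Proof.
move=> [i1 i2] [m1 m2 [M HM]].
have b1 : [bounded Re (u x) | x in setT].
  by apply: (@bndT _ _ M) => x; case: (HM x).
have b2 : [bounded Im (u x) | x in setT].
  by apply: (@bndT _ _ M) => x; case: (HM x).
split.
- have H : rho.-integrable setT (((fun x => (Re (h x))%:E) \* (EFin \o (fun x => Re (u x))))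
     \- ((fun x => (Im (h x))%:E) \* (EFin \o (fun x => Im (u x)))))%E.
    by apply: integrableB => //; apply: integrableMl.
  apply: (eq_integrable measurableT _ _ _ H).
  by move=> x _ /=; rewrite cReM EFinB !EFinM.
- have H : rho.-integrable setT (((fun x => (Re (h x))%:E) \* (EFin \o (fun x => Im (u x))))
     \+ ((fun x => (Im (h x))%:E) \* (EFin \o (fun x => Re (u x)))))%E.
    by apply: integrableD => //; apply: integrableMl.
  apply: (eq_integrable measurableT _ _ _ H).
  by move=> x _ /=; rewrite cImM EFinD !EFinM.
Qed.

Lemma cintD rho f g : cok rho f -> cok rho g ->
  cint rho (fun x => f x + g x) = cint rho f + cint rho g.
Proof.
move=> [f1 f2] [g1 g2]; rewrite /cint.
under eq_Rintegral do rewrite cReD.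
under [X in _ +i* X]eq_Rintegral do rewrite cImD.
by rewrite !RintegralD.
Qed.

Lemma intZ (rho : {finite_measure set R -> \bar R}) (k : R) (f : R -> R) :
  rho.-integrable setT (fun x => (f x)%:E) ->
  rho.-integrable setT (EFin \o (fun x => k * f x)).
Proof.
move=> H; apply: (eq_integrable measurableT _ _ _ (integrableZl measurableT k H)).
by move=> x _ /=; rewrite EFinM.
Qed.

Lemma cintZ rho f (c : C) : cok rho f ->
  cint rho (fun x => c * f x) = c * cint rho f.
Proof.
move=> [f1 f2]; rewrite /cint.
under eq_Rintegral do rewrite cReM.
under [X in _ +i* X]eq_Rintegral do rewrite cImM.
rewrite RintegralB ?RintegralD ?RintegralZl //; try exact: intZ.
by case: c => a b.
Qed.


Definition Kof (rho : {finite_measure set R -> \bar R}) (h : R -> C) :=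
  Rintegral rho setT (fun x => `|Re (h x)| + `|Im (h x)|).

Lemma int_abs2 rho h : cok rho h ->
  rho.-integrable setT (fun x => (`|Re (h x)| + `|Im (h x)|)%:E).
Proof.
move=> [i1 i2].
have H := integrableD measurableT (integrable_abse i1) (integrable_abse i2).
apply: (eq_integrable measurableT _ _ _ H).
by move=> x _ /=; rewrite EFinD.
Qed.

Lemma Kof_ge0 rho h : 0 <= Kof rho h.
Proof. by apply: Rintegral_ge0 => x _; rewrite addr_ge0. Qed.

Lemma cint_bound rho h u M : cok rho h -> nice u -> nicebd u M ->
  (`|Re (cint rho (fun x => h x * u x))| <= M * Kof rho h) /\
  (`|Im (cint rho (fun x => h x * u x))| <= M * Kof rho h).
Proof.
move=> ch nu bu; have [i1 i2] := cok_mul ch nu.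
have iK := int_abs2 ch.
have iMK : rho.-integrable setT (EFin \o (fun x => M * (`|Re (h x)| + `|Im (h x)|))).
  exact: intZ.
rewrite /Kof -RintegralZl //; split.
- apply: le_trans (le_normr_Rintegral measurableT i1) _.
  apply: le_Rintegral => //.
    have H := integrable_abse i1.
    apply: (eq_integrable measurableT _ _ _ H).
    by move=> x _.
  move=> x _; rewrite cReM; have [b1 b2] := bu x.
  apply: le_trans (ler_normB _ _) _; rewrite !normrM mulrDr.
  by apply: lerD; rewrite mulrC; apply: ler_wpM2r.
- apply: le_trans (le_normr_Rintegral measurableT i2) _.
  apply: le_Rintegral => //.
    have H := integrable_abse i2.
    apply: (eq_integrable measurableT _ _ _ H).
    by move=> x _.
  move=> x _; rewrite cImM; have [b1 b2] := bu x.
  apply: le_trans (ler_normD _ _) _; rewrite !normrM mulrDr.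
  by apply: lerD; rewrite mulrC; apply: ler_wpM2r.
Qed.

Lemma meas_param (rho : {finite_measure set R -> \bar R}) (f : R * R -> R) :
  measurable_fun setT f ->
  measurable_fun setT (fun x => Rintegral rho setT (fun t => f (x, t))).
Proof.
move=> mf.
pose g := (fun p => (f p)%:E).
have mEf : measurable_fun setT g by exact/measurable_EFinP.
rewrite [X in measurable_fun _ X](_ : _ = fine \o
   (fubini_F rho g^\+ \- fubini_F rho g^\-)%E); last first.
  apply: funext => x; rewrite /Rintegral integralE /fubini_F /=.
  by congr (fine (_ - _)); apply: eq_integral => y _; rewrite ?funeposE ?funenegE.
apply: (measurableT_comp (fine_measurable measurableT)).
apply: emeasurable_funB.
- apply: measurable_fun_fubini_tonelli_F; first exact: measurable_funepos.
  by move=> z; exact: funepos_ge0.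
- apply: measurable_fun_fubini_tonelli_F; first exact: measurable_funeneg.
  by move=> z; exact: funeneg_ge0.
Qed.

Lemma measurable_addT2 : measurable_fun setT (fun p : R * R => addT p.1 p.2).
Proof.
have ms : measurable_fun setT (fun p : R * R => p.1 + p.2).
  by apply: measurable_funD; [exact: measurable_fst|exact: measurable_snd].
rewrite /addT; apply: (@measurable_fun_ifT _ _ _ _ (fun p : R * R => p.1 + p.2)
  (fun p : R * R => p.1 + p.2 - 2 * pi) (fun p : R * R => p.1 + p.2 < 2 * pi)).
- by apply: measurable_fun_ltr => //; exact: measurable_cst.
- exact: ms.
- by apply: measurable_funB => //; exact: measurable_cst.
Qed.

Lemma measurable_addT x : measurable_fun setT (@addT R x).
Proof.
have ms : measurable_fun setT (fun t : R => x + t).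
  by apply: measurable_funD; [exact: measurable_cst|exact: measurable_id].
rewrite /addT; apply: (@measurable_fun_ifT _ _ _ _ (fun t : R => x + t)
  (fun t : R => x + t - 2 * pi) (fun t : R => x + t < 2 * pi)).
- by apply: measurable_fun_ltr => //; exact: measurable_cst.
- exact: ms.
- by apply: measurable_funB => //; exact: measurable_cst.
Qed.

Lemma in_setb (b : R -> bool) s : (s \in [set x | b x]) = b s.
Proof. by apply/idP/idP => h; [exact: (set_mem h) | exact: mem_set]. Qed.
Lemma meas_ge (g : R -> R) c : measurable_fun setT g -> measurable [set s | c <= g s].
Proof.
move=> mg.
have := mg measurableT _ (measurable_itv `[c, +oo[).
rewrite setTI; congr measurable; apply/seteqP; split => s /=; rewrite in_itv /= andbT //.
Qed.
End Ana.

Section Lin.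
Variable R : realType.
Local Notation C := R[i].
Local Notation Re := (@complex.Re R).
Local Notation Im := (@complex.Im R).

Definition Fin (b : atom R) (G : R -> C) (x : R) :=
  cint (a_meas b) (fun t => a_dens b t * G (addT x t)).
Definition J (a b : atom R) (G : R -> C) :=
  cint (a_meas a) (fun x => a_dens a x * Fin b G x).

Lemma wf_cok (a : atom R) : atom_wf a -> cok (a_meas a) (a_dens a).
Proof. by case. Qed.

Lemma cok_meas rho (h : R -> C) : cok rho h ->
  measurable_fun setT (fun x => Re (h x)) /\ measurable_fun setT (fun x => Im (h x)).
Proof.
move=> [i1 i2]; split; apply/measurable_EFinP.
- exact: (measurable_int _ i1).
- exact: (measurable_int _ i2).
Qed.

Lemma nice_Fin b G M : cok (a_meas b) (a_dens b) -> nice G -> nicebd G M ->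
  nice (Fin b G) /\ nicebd (Fin b G) (M * Kof (a_meas b) (a_dens b)).
Proof.
move=> cb nG bG.
have [mh1 mh2] := cok_meas cb.
have [mG1 mG2 _] := nG.
have nGx x : nice (fun t => G (addT x t)).
  by apply: nice_comp => //; exact: measurable_addT.
have bGx x : nicebd (fun t => G (addT x t)) M by move=> t; exact: bG.
have bd : nicebd (Fin b G) (M * Kof (a_meas b) (a_dens b)).
  by move=> x; exact: (cint_bound cb (nGx x) (bGx x)).
split => //; split.
- apply: (@meas_param R (a_meas b) (fun p : R * R =>
      Re (a_dens b p.2 * G (addT p.1 p.2)))).
  under eq_fun do rewrite cReM.
  apply: measurable_funB; apply: measurable_funM.
  + exact: (measurableT_comp mh1 measurable_snd).
  + by apply: (measurableT_comp (f := fun x => _ (G x))) => //; exact: measurable_addT2.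
  + exact: (measurableT_comp mh2 measurable_snd).
  + by apply: (measurableT_comp (f := fun x => _ (G x))) => //; exact: measurable_addT2.
- apply: (@meas_param R (a_meas b) (fun p : R * R =>
      Im (a_dens b p.2 * G (addT p.1 p.2)))).
  under eq_fun do rewrite cImM.
  apply: measurable_funD; apply: measurable_funM.
  + exact: (measurableT_comp mh1 measurable_snd).
  + by apply: (measurableT_comp (f := fun x => _ (G x))) => //; exact: measurable_addT2.
  + exact: (measurableT_comp mh2 measurable_snd).
  + by apply: (measurableT_comp (f := fun x => _ (G x))) => //; exact: measurable_addT2.
- by exists (M * Kof (a_meas b) (a_dens b)).
Qed.

Lemma nice_Fin' b G : cok (a_meas b) (a_dens b) -> nice G -> nice (Fin b G).
Proof. by move=> cb nG; have [_ _ [M bG]] := nG; case: (nice_Fin cb nG bG). Qed.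

Lemma Fin_add b G1 G2 : cok (a_meas b) (a_dens b) -> nice G1 -> nice G2 ->
  Fin b (fun s => G1 s + G2 s) = (fun x => Fin b G1 x + Fin b G2 x).
Proof.
move=> cb n1 n2; apply: funext => x; rewrite /Fin -cintD.
- by congr cint; apply: funext => t; rewrite mulrDr.
- by apply: cok_mul => //; apply: nice_comp => //; exact: measurable_addT.
- by apply: cok_mul => //; apply: nice_comp => //; exact: measurable_addT.
Qed.

Lemma Fin_scale b c G : cok (a_meas b) (a_dens b) -> nice G ->
  Fin b (fun s => c * G s) = (fun x => c * Fin b G x).
Proof.
move=> cb n1; apply: funext => x; rewrite /Fin -cintZ.
- by congr cint; apply: funext => t; rewrite mulrCA.
- by apply: cok_mul => //; apply: nice_comp => //; exact: measurable_addT.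
Qed.

Lemma J_add a b G1 G2 : cok (a_meas a) (a_dens a) -> cok (a_meas b) (a_dens b) ->
  nice G1 -> nice G2 -> J a b (fun s => G1 s + G2 s) = J a b G1 + J a b G2.
Proof.
move=> ca cb n1 n2; rewrite /J Fin_add // -cintD.
- by congr cint; apply: funext => t; rewrite mulrDr.
- by apply: cok_mul => //; exact: nice_Fin'.
- by apply: cok_mul => //; exact: nice_Fin'.
Qed.

Lemma J_scale a b c G : cok (a_meas a) (a_dens a) -> cok (a_meas b) (a_dens b) ->
  nice G -> J a b (fun s => c * G s) = c * J a b G.
Proof.
move=> ca cb n1; rewrite /J Fin_scale // -cintZ.
- by congr cint; apply: funext => t; rewrite mulrCA.
- by apply: cok_mul => //; exact: nice_Fin'.
Qed.

Lemma J_bd a b G M : cok (a_meas a) (a_dens a) -> cok (a_meas b) (a_dens b) ->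
  nice G -> nicebd G M ->
  (`|Re (J a b G)| <= M * Kof (a_meas b) (a_dens b) * Kof (a_meas a) (a_dens a)) /\
  (`|Im (J a b G)| <= M * Kof (a_meas b) (a_dens b) * Kof (a_meas a) (a_dens a)).
Proof.
move=> ca cb nG bG; have [nF bF] := nice_Fin cb nG bG.
exact: (cint_bound ca nF bF).
Qed.

Definition L (X Y : cmeasure R) G := \sum_(a <- X) \sum_(b <- Y) J a b G.
Definition KL (X Y : cmeasure R) :=
  \sum_(a <- X) \sum_(b <- Y) (Kof (a_meas b) (a_dens b) * Kof (a_meas a) (a_dens a)).

Lemma big_wf_eq (X : cmeasure R) (F G : atom R -> C) : cm_wf X ->
  (forall a, atom_wf a -> F a = G a) -> \sum_(a <- X) F a = \sum_(a <- X) G a.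
Proof.
elim: X => [|a X IH] /=; first by rewrite !big_nil.
by move=> [wa wX] H; rewrite !big_cons H // IH.
Qed.

Lemma big_wf_le (X : cmeasure R) (F G : atom R -> R) : cm_wf X ->
  (forall a, atom_wf a -> F a <= G a) -> \sum_(a <- X) F a <= \sum_(a <- X) G a.
Proof.
elim: X => [|a X IH] /=; first by rewrite !big_nil.
by move=> [wa wX] H; rewrite !big_cons; apply: lerD; [exact: H|exact: IH].
Qed.

Lemma Re_sum (T : Type) (s : seq T) (F : T -> C) :
  Re (\sum_(a <- s) F a) = \sum_(a <- s) Re (F a).
Proof. by elim: s => [|a s IH]; rewrite ?big_nil ?big_cons ?cReD ?IH. Qed.

Lemma Im_sum (T : Type) (s : seq T) (F : T -> C) :
  Im (\sum_(a <- s) F a) = \sum_(a <- s) Im (F a).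
Proof. by elim: s => [|a s IH]; rewrite ?big_nil ?big_cons ?cImD ?IH. Qed.

Lemma L_add X Y G1 G2 : cm_wf X -> cm_wf Y -> nice G1 -> nice G2 ->
  L X Y (fun s => G1 s + G2 s) = L X Y G1 + L X Y G2.
Proof.
move=> wX wY n1 n2; rewrite /L -big_split; apply: big_wf_eq => // a wa.
rewrite -big_split; apply: big_wf_eq => // b wb.
by apply: J_add => //; exact: wf_cok.
Qed.

Lemma L_scale X Y c G : cm_wf X -> cm_wf Y -> nice G ->
  L X Y (fun s => c * G s) = c * L X Y G.
Proof.
move=> wX wY n1; rewrite /L mulr_sumr; apply: big_wf_eq => // a wa.
rewrite mulr_sumr; apply: big_wf_eq => // b wb.
by apply: J_scale => //; exact: wf_cok.
Qed.

Lemma L_bd X Y G M : cm_wf X -> cm_wf Y -> nice G -> nicebd G M ->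
  (`|Re (L X Y G)| <= M * KL X Y) /\ (`|Im (L X Y G)| <= M * KL X Y).
Proof.
move=> wX wY nG bG; rewrite /L /KL !mulr_sumr Re_sum Im_sum; split.
- apply: le_trans (ler_norm_sum _ _ _) _; apply: big_wf_le => // a wa.
  rewrite Re_sum mulr_sumr; apply: le_trans (ler_norm_sum _ _ _) _.
  apply: big_wf_le => // b wb; rewrite mulrA.
  by case: (J_bd (wf_cok wa) (wf_cok wb) nG bG).
- apply: le_trans (ler_norm_sum _ _ _) _; apply: big_wf_le => // a wa.
  rewrite Im_sum mulr_sumr; apply: le_trans (ler_norm_sum _ _ _) _.
  apply: big_wf_le => // b wb; rewrite mulrA.
  by case: (J_bd (wf_cok wa) (wf_cok wb) nG bG).
Qed.

Lemma KL_ge0 X Y : 0 <= KL X Y.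
Proof.
by apply: sumr_ge0 => a _; apply: sumr_ge0 => b _; apply: mulr_ge0; exact: Kof_ge0.
Qed.

End Lin.

Section Ext.
Variable R : realType.
Local Notation C := R[i].
Local Notation Re := (@complex.Re R).
Local Notation Im := (@complex.Im R).

Lemma sum_true (d y : R) (K : nat) : 0 < d -> K%:R * d <= y ->
  (\sum_(0 <= j < K) d * ((j.+1%:R * d <= y)%R)%:R)%R = K%:R * d.
Proof.
move=> d0; elim: K => [|K IH] hK; first by rewrite big_nil mul0r.
rewrite big_nat_recr //= IH; last first.
  by apply: le_trans hK; rewrite ler_pM2r // ler_nat.
by rewrite hK mulr1 -addn1 natrD mulrDl mul1r.
Qed.

Lemma count_bd (d y : R) (K : nat) : 0 < d -> 0 <= y -> y <= K%:R * d ->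
  y - d < (\sum_(0 <= j < K) d * ((j.+1%:R * d <= y)%R)%:R)%R <= y.
Proof.
move=> d0 y0; elim: K => [|K IH] hK.
  rewrite big_nil; have -> : y = 0 by apply: le_anti; rewrite y0 andbT; rewrite mul0r in hK.
  by rewrite sub0r oppr_lt0 d0 lexx.
rewrite big_nat_recr //=.
have [yK|Ky] := leP y (K%:R * d).
  have /andP[h1 h2] := IH yK.
  have -> : (K.+1%:R * d <= y) = false.
    apply/negbTE; rewrite -ltNge; apply: le_lt_trans yK _.
    by rewrite ltr_pM2r // ltr_nat.
  by rewrite mulr0 addr0 h1 h2.
rewrite sum_true //; last exact: ltW.
have [h|h] := leP (K.+1%:R * d) y; rewrite /= ?mulr1 ?mulr0;
  move: h hK; rewrite -addn1 natrD mulrDl mul1r => h hK; apply/andP; split; lra.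
Qed.

Definition ind (A : set R) : R -> C := fun s => ((s \in A)%:R).

Lemma Re_b (b : bool) : Re (b%:R) = b%:R. Proof. by case: b. Qed.
Lemma Im_b (b : bool) : Im (b%:R) = 0. Proof. by case: b. Qed.

Lemma nice_ind A : measurable A -> nice (ind A) /\ nicebd (ind A) 1.
Proof.
move=> mA; split; last first.
  by move=> s; rewrite /ind Re_b Im_b normr0 ler01; case: (s \in A); rewrite /= ?normr1 ?normr0.
split.
- rewrite (_ : (fun x => _) = \1_A); first exact: measurable_indic.
  by apply: funext => s; rewrite /ind Re_b indicE.
- by rewrite (_ : (fun x => _) = fun _ => 0); [exact: measurable_cst|apply: funext => s; rewrite /ind Im_b].
- by exists 1 => s; rewrite /ind Re_b Im_b normr0 ler01; case: (s \in A); rewrite /= ?normr1 ?normr0.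
Qed.

Lemma nice_real (g : R -> R) M : measurable_fun setT g -> (forall s, `|g s| <= M) ->
  nice (fun s => (g s)%:C) /\ nicebd (fun s => (g s)%:C) M.
Proof.
move=> mg hg; have M0 : 0 <= M by apply: le_trans (hg 0).
split; last by move=> s /=; rewrite normr0 M0 hg.
split; [exact: mg|exact: measurable_cst|].
by exists M => s /=; rewrite normr0 M0 hg.
Qed.

Lemma nice_sum (K : nat) (F : nat -> R -> C) : (forall j, nice (F j)) ->
  nice (fun s => \sum_(0 <= j < K) F j s).
Proof.
move=> nF; elim: K => [|K IH].
  by rewrite (_ : (fun s => _) = fun _ => 0); [exact: nice_cst|apply: funext => s; rewrite big_nil].
rewrite (_ : (fun s => _) = fun s => \sum_(0 <= j < K) F j s + F K s); last first.
  by apply: funext => s; rewrite big_nat_recr.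
exact: niceD.
Qed.

Lemma L_zero (X Y : cmeasure R) : cm_wf X -> cm_wf Y -> L X Y (fun _ => 0) = 0.
Proof.
move=> wX wY.
rewrite (_ : (fun _ => 0) = fun s => 0 * (fun _ : R => 1 : C) s); last first.
  by apply: funext => s; rewrite mul0r.
by rewrite L_scale // ?mul0r //; exact: nice_cst.
Qed.

Lemma L_sum (X Y : cmeasure R) (K : nat) (F : nat -> R -> C) : cm_wf X -> cm_wf Y ->
  (forall j, nice (F j)) ->
  L X Y (fun s => \sum_(0 <= j < K) F j s) = \sum_(0 <= j < K) L X Y (F j).
Proof.
move=> wX wY nF; elim: K => [|K IH].
  rewrite big_nil (_ : (fun s => _) = fun _ => 0); first exact: L_zero.
  by apply: funext => s; rewrite big_nil.
rewrite (_ : (fun s => _) = fun s => \sum_(0 <= j < K) F j s + F K s); last first.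
  by apply: funext => s; rewrite big_nat_recr.
by rewrite L_add // ?IH ?big_nat_recr //; exact: nice_sum.
Qed.

Lemma small0 (x c : R) : 0 <= c -> (forall e, 0 < e -> `|x| <= e * c) -> x = 0.
Proof.
move=> c0 H; apply/eqP; rewrite -normr_eq0; apply/eqP.
have [->|nx] := eqVneq `|x| 0 => //.
have xp : 0 < `|x| by rewrite lt_def nx normr_ge0.
have e0 : 0 < `|x| / (c + 1) by rewrite divr_gt0 // ltr_wpDl.
have := H _ e0; rewrite mulrAC ler_pdivlMr ?ltr_wpDl //.
move=> h; exfalso; move: h; apply/negP; rewrite -ltNge; nra.
Qed.

Lemma L_real (X Y : cmeasure R) (g : R -> R) M : cm_wf X -> cm_wf Y ->
  (forall A, measurable A -> L X Y (ind A) = ind A 0) ->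
  measurable_fun setT g -> (forall s, `|g s| <= M) ->
  L X Y (fun s => (g s)%:C) = (g 0)%:C.
Proof.
move=> wX wY HA mg hg.
have M0 : 0 <= M by apply: le_trans (hg 0).
have [ng bg] := nice_real mg hg.
have key : forall d, 0 < d ->
   (`|Re (L X Y (fun s => (g s)%:C)) - g 0| <= d * (KL X Y + 1)) /\
   (`|Im (L X Y (fun s => (g s)%:C))| <= d * (KL X Y + 1)).
  move=> d d0.
  pose K := Num.Def.archi_bound (2 * M / d).
  have hK : 2 * M <= K%:R * d.
    have h0 : 0 <= 2 * M / d by apply: divr_ge0; [apply: mulr_ge0|exact: ltW].
    by have := archi_boundP h0; rewrite ltr_pdivrMr // => /ltW.
  pose B (j : nat) := [set s | j.+1%:R * d - M <= g s].
  have mB j : measurable (B j) by apply: meas_ge.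
  pose S s := (\sum_(0 <= j < K) d * ((j.+1%:R * d <= g s + M)%R)%:R)%R.
  pose E := fun s => (-M)%:C * ind setT s + \sum_(0 <= j < K) d%:C * ind (B j) s.
  have EE s : E s = (- M + S s)%:C.
    rewrite /E /S /ind in_setT rmorphD rmorph_sum /= mulr1 rmorphN; congr (_ + _).
    by apply: eq_bigr => j _; rewrite rmorphM /= in_setb lerBlDr rmorph_nat.
  have nB j : nice (fun s => d%:C * ind (B j) s).
    by apply: niceM; [exact: nice_cst|exact: (nice_ind (mB j)).1].
  have nT : nice (fun s => (-M)%:C * ind setT s).
    by apply: niceM; [exact: nice_cst|exact: (nice_ind measurableT).1].
  have nE : nice E by apply: niceD => //; exact: nice_sum.
  have LE : L X Y E = E 0.
    rewrite /E L_add //; last exact: nice_sum.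
    rewrite L_scale //; last exact: (nice_ind measurableT).1.
    rewrite HA // L_sum //; congr (_ + _); apply: eq_bigr => j _.
    by rewrite L_scale ?HA //; exact: (nice_ind (mB j)).1.
  have bS s : g s - d < - M + S s <= g s.
    have y0 : 0 <= g s + M by have := hg s; rewrite ler_norml => /andP[? ?]; lra.
    have yK : g s + M <= K%:R * d by have := hg s; rewrite ler_norml => /andP[? ?]; lra.
    have /andP[h1 h2] := count_bd d0 y0 yK.
    by rewrite /S; apply/andP; split; lra.
  pose G' := fun s => (g s)%:C + (-1) * E s.
  have nG' : nice G' by apply: niceD => //; apply: niceM => //; exact: nice_cst.
  have G'E s : G' s = (g s - (- M + S s))%:C.
    by rewrite /G' EE mulN1r rmorphB.
  have bG' : nicebd G' d.
    move=> s; rewrite G'E /= normr0 (ltW d0); split => //.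
    by have /andP[h1 h2] := bS s; rewrite ler_norml; apply/andP; split; lra.
  have gE : (fun s => (g s)%:C) = (fun s => G' s + E s).
    by apply: funext => s; rewrite /G' mulN1r addrNK.
  rewrite gE L_add // LE cReD cImD.
  have [b1 b2] := L_bd wX wY nG' bG'.
  have KL0 := KL_ge0 X Y.
  rewrite EE /=; split.
  - have /andP[h1 h2] := bS 0.
    rewrite -addrA; apply: le_trans (ler_normD _ _) _; rewrite mulrDr mulr1.
    apply: lerD; first exact: b1.
    by rewrite ler_norml; apply/andP; split; lra.
  - rewrite addr0; apply: le_trans b2 _; rewrite ler_pM2l // lerDl //.
have hRe : Re (L X Y (fun s => (g s)%:C)) - g 0 = 0.
  by apply: (small0 (c := KL X Y + 1)); [rewrite addr_ge0 ?KL_ge0 | move=> e /key []].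
have hIm : Im (L X Y (fun s => (g s)%:C)) = 0.
  by apply: (small0 (c := KL X Y + 1)); [rewrite addr_ge0 ?KL_ge0 | move=> e /key []].
move/eqP: hRe; rewrite subr_eq0 => /eqP hRe.
move: hRe hIm; case: (L X Y _) => a b /= -> ->; by [].
Qed.

Lemma L_ext (X Y : cmeasure R) G : cm_wf X -> cm_wf Y ->
  (forall A, measurable A -> L X Y (ind A) = ind A 0) ->
  nice G -> L X Y G = G 0.
Proof.
move=> wX wY HA nG; have [m1 m2 [M HM]] := nG.
have b1 s : `|Re (G s)| <= M by case: (HM s).
have b2 s : `|Im (G s)| <= M by case: (HM s).
have [n1 _] := nice_real m1 b1.
have [n2 _] := nice_real m2 b2.
have -> : G = fun s => (Re (G s))%:C + 'i * (Im (G s))%:C.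
  by apply: funext => s; rewrite -complexE.
rewrite L_add //; last by apply: niceM => //; exact: nice_cst.
rewrite L_scale // (L_real wX wY HA m1 b1) (L_real wX wY HA m2 b2).
by rewrite -complexE.
Qed.

End Ext.

Section Fin5.
Variable R : realType.
Local Notation C := R[i].
Local Notation Re := (@complex.Re R).
Local Notation Im := (@complex.Im R).
Implicit Types (mu nu X Y : cmeasure R).

Lemma cint_dirac (a : R) (f : R -> C) : nice f ->
  cint (\d_a : {finite_measure set R -> \bar R}) f = f a.
Proof.
move=> [m1 m2 _]; rewrite /cint /Rintegral.
rewrite !integral_dirac //=; try exact/measurable_EFinP.
rewrite indicE mem_set // !mul1r.
by case: (f a).
Qed.

Definition ex (m : int) (s : R) : C := expi (m%:~R * s).

Lemma nice_ex m : nice (ex m).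
Proof.
have mm : measurable_fun setT (fun s : R => m%:~R * s).
  by apply: measurable_funM; [exact: measurable_cst|exact: measurable_id].
split.
- apply: (measurableT_comp (f := cos)) => //; exact: (continuous_measurable_fun (@continuous_cos R)).
- apply: (measurableT_comp (f := sin)) => //; exact: (continuous_measurable_fun (@continuous_sin R)).
- by exists 1 => s; rewrite /ex /expi /=; split; [exact: cos_max|exact: sin_max].
Qed.

Definition TmA (m : int) (a : atom R) :=
  Atom (a_meas a) (fun t => expi (m%:~R * t) * a_dens a t).

Lemma J_Tm m a b G : cok (a_meas b) (a_dens b) -> nice G ->
  J (TmA m a) (TmA m b) G = J a b (fun s => ex m s * G s).
Proof.
move=> cb nG; rewrite /J /=; congr cint; apply: funext => x.
have -> : Fin b (fun s => ex m s * G s) x = ex m x * Fin (TmA m b) G x.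
  rewrite /Fin /= -cintZ; last first.
    rewrite (_ : (fun t => _) = (fun t => a_dens b t * (ex m t * G (addT x t)))); last first.
      by apply: funext => t; rewrite /ex [_ * a_dens b t]mulrC -mulrA.
    apply: cok_mul => //; apply: niceM; first exact: nice_ex.
    by apply: nice_comp => //; exact: measurable_addT.
  congr cint; apply: funext => t; rewrite /ex expi_addT.
  by rewrite mulrCA -!mulrA; congr (_ * _); rewrite mulrCA.
by rewrite /ex mulrCA mulrA.
Qed.

Lemma conv_L X Y A : conv_val X Y A = L X Y (ind A).
Proof. by []. Qed.

Lemma nice_indA (A : set R) : measurable A -> nice (ind A).
Proof. by move=> mA; case: (nice_ind mA). Qed.

Lemma cm_val_delta0 (A : set R) : measurable A -> cm_val (delta0 R) A = ind A 0.
Proof.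
move=> mA; rewrite /cm_val big_cons big_nil addr0 /=.
rewrite (_ : (fun x => 1 * (x \in A)%:R) = ind A); last first.
  by apply: funext => x; rewrite mul1r.
by rewrite cint_dirac //; exact: nice_indA.
Qed.

Lemma conv_Tm m X Y A : cm_wf Y -> measurable A ->
  conv_val (Tm m X) (Tm m Y) A = L X Y (fun s => ex m s * ind A s).
Proof.
move=> wY mA; rewrite conv_L /L /Tm big_map; apply: eq_bigr => a _.
rewrite big_map; apply: big_wf_eq => // b wb.
by rewrite -J_Tm //; [exact: wf_cok|exact: nice_indA].
Qed.

Lemma transfer m X Y : cm_wf X -> cm_wf Y ->
  (forall A, measurable A -> conv_val X Y A = cm_val (delta0 R) A) ->
  forall A, measurable A -> conv_val (Tm m X) (Tm m Y) A = cm_val (delta0 R) A.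
Proof.
move=> wX wY H A mA; rewrite conv_Tm // L_ext //.
- by rewrite cm_val_delta0 // /ex mulr0 expi0 mul1r.
- by move=> B mB; rewrite -conv_L H // cm_val_delta0.
- by apply: niceM; [exact: nice_ex|exact: nice_indA].
Qed.

Lemma cm_wf_cat X Y : cm_wf (X ++ Y) <-> cm_wf X /\ cm_wf Y.
Proof.
elim: X => [|a X IH] /=; first by split => // [[]].
rewrite IH; tauto.
Qed.

Lemma cm_wf_Tm m X : cm_wf X -> cm_wf (Tm m X).
Proof.
elim: X => [|a X IH] //= [wa wX]; split; last exact: IH.
have [c0 i1 i2] := wa.
have cm : cok (a_meas a) (fun t => a_dens a t * ex m t).
  by apply: cok_mul; [exact: wf_cok|exact: nice_ex].
have -> : (fun t => expi (m%:~R * t) * a_dens a t) = (fun t => a_dens a t * ex m t).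
  by apply: funext => t; rewrite mulrC.
by split => //; case: cm.
Qed.

Lemma conv_cat X1 X2 Y A : conv_val (X1 ++ X2) Y A = conv_val X1 Y A + conv_val X2 Y A.
Proof. by rewrite /conv_val big_cat. Qed.

Lemma dirac_swap m (c : C) Y A : cm_wf Y -> measurable A ->
  conv_val (Tm m (cm_scale c (delta0 R))) Y A = conv_val (cm_scale c (delta0 R)) Y A.
Proof.
move=> wY mA; rewrite !conv_L /L /= !big_cons !big_nil !addr0.
apply: big_wf_eq => // b wb; rewrite /J /=.
have nF : nice (Fin b (ind A)) by apply: nice_Fin'; [exact: wf_cok|exact: nice_indA].
rewrite !cint_dirac.
- by rewrite mulr0 expi0 mul1r.
- by apply: niceM => //; exact: nice_cst.
- apply: niceM => //; apply: niceM; first exact: nice_ex.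
  exact: nice_cst.
Qed.

Lemma wf_scale_delta (c : C) : cm_wf (cm_scale c (delta0 R)).
Proof.
split => //; split.
- rewrite /= diracE memNset // /= in_itv /= lexx /=.
  by rewrite mulr_gt0 // pi_gt0.
- by apply: (eq_integrable measurableT _ _ _ (finite_measure_integrable_cst _ (complex.Re (c * 1)) measurableT)).
- by apply: (eq_integrable measurableT _ _ _ (finite_measure_integrable_cst _ (complex.Im (c * 1)) measurableT)).
Qed.

Lemma inv_Tm m mu (lam : C) : cm_wf mu ->
  cm_invertible (mu ++ cm_scale (- lam) (delta0 R)) ->
  cm_invertible (Tm m mu ++ cm_scale (- lam) (delta0 R)).
Proof.
move=> wmu [nu [wnu Hnu]].
have wS := wf_scale_delta (- lam).
exists (Tm m nu); split; first exact: cm_wf_Tm.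
move=> A mA.
rewrite conv_cat -(dirac_swap m) //; last exact: cm_wf_Tm.
rewrite -conv_cat -Tm_cat; apply: transfer => //.
exact/cm_wf_cat.
Qed.

Lemma spectrum_Tm m mu : cm_wf mu -> spectrum (Tm m mu) = spectrum mu.
Proof.
move=> wmu; apply/seteqP; split => lam /= H1 H2; apply: H1.
- exact: inv_Tm.
- have := inv_Tm (- m) (cm_wf_Tm m wmu) H2.
  by rewrite TmK.
Qed.

Lemma inN_Tm m mu : cm_wf mu -> inN (Tm m mu) <-> inN mu.
Proof. by move=> wmu; rewrite /inN spectrum_Tm // range_fourier_Tm. Qed.

End Fin5.

Theorem mainTheorem17 (R : realType) (mu : cmeasure R) :
  cm_wf mu ->
  (spectrally_reasonable mu <-> forall m : int, spectrally_reasonable (Tm m mu)).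
Proof.
move=> wmu; split; last by move=> /(_ 0); rewrite Tm0.
move=> SR m nu wnu Nnu.
have wnu' : cm_wf (Tm (- m) nu) by exact: cm_wf_Tm.
have N' : inN (Tm (- m) nu) by apply/inN_Tm.
have := SR _ wnu' N'.
rewrite -(inN_Tm m); last by apply/cm_wf_cat.
have E : Tm m (Tm (- m) nu) = nu by rewrite -{1}(opprK m) TmK.
by rewrite Tm_cat E.
Qed.
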